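(* Let $A$ be a CFG-ring and $n,m\ge1$. A map $f:A^{n}\to A^{m}$ is contractive (i.e. $d(f(x),f(y))\le d(x,y)$ for all $x,y\in A^n$) if and only if there exist polynomials $f_1,\dots,f_m\in A[X_1,\dots,X_n]$ with $f(x)=(f_1(x),\dots,f_m(x))$ for all $x\in A^n$.
   Context: All rings are commutative with identity. A regular ring is a commutative von Neumann regular ring. For a regular ring $A$, $B(A)$ is the Boolean ring of idempotents of $A$ (product from $A$, sum $a\tilde+b=(a-b)^2$, $a\vee b=a+b-ab$, $a\le b\iff ab=a$), and $e(a)$ is the unique idempotent with $aA=e(a)A$. On $A^k$ the metric is $d((x_i),(y_i))=e(x_1-y_1)\vee\cdots\vee e(x_k-y_k)\in B(A)$. A Boolean metric space over a Boolean ring $B$: a set $X$ with $d:X\times X\to B$ satisfying $d(x,y)=0\iff x=y$, symmetry, and $d(x,z)\le d(x,y)\vee d(y,z)$. For $x_1,\dots,x_k\in X$, $a_1,\dots,a_k\in B$ pairwise disjoint with sum $1$, $x$ is a convex combination of the $x_i$ with coefficients $a_i$ if $a_id(x,x_i)=0$ for all $i$. $X$ is a CFG-space if all such convex combinations exist in $X$ and every element of $X$ is a convex combination of elements of some fixed finite subset of $X$. A CFG-ring is a regular ring $A$ such that $A$ with metric $d(x,y)=e(x-y)$ is a CFG-space over $B(A)$. *)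

(* Defs.v *)
From HB Require Import structures.
From mathcomp Require Import all_boot all_order all_algebra.
From Stdlib Require Import ClassicalEpsilon.
Set Implicit Arguments. Unset Strict Implicit. Unset Printing Implicit Defensive.
Import GRing.Theory.
Local Open Scope ring_scope.

Section Defs.
Variable A : comPzRingType.

Definition regular_ring : Prop := forall a : A, exists b : A, a * b * a = a.

Definition idempotent (e : A) : Prop := e * e = e.

Definition gen_idem (a e : A) : Prop :=
  idempotent e /\ (exists u, a = e * u) /\ (exists v, e = a * v).

(* e(a): the (in a regular ring unique) idempotent with aA = e(a)A *)
Definition eid (a : A) : A := epsilon (inhabits 0) (gen_idem a).

(* Boolean ring operations on B(A) *)
Definition bjoin (a b : A) : A := a + b - a * b.
Definition bplus (a b : A) : A := (a - b) ^+ 2.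
Definition ble (a b : A) : Prop := a * b = a.

Definition dist (k : nat) (x y : 'I_k -> A) : A :=
  \big[bjoin/0]_(i < k) eid (x i - y i).

Definition dA (x y : A) : A := eid (x - y).

Definition partition_of_unity (k : nat) (a : 'I_k -> A) : Prop :=
  (forall i, idempotent (a i)) /\
  (forall i j, i != j -> a i * a j = 0) /\
  \big[bplus/0]_(i < k) a i = 1.

Definition convex_comb (k : nat) (x : A) (xs : 'I_k -> A) (a : 'I_k -> A) : Prop :=
  forall i, a i * dA x (xs i) = 0.

(* A with d(x,y) = e(x-y) is a CFG-space over B(A) *)
Definition CFG_ring : Prop :=
  regular_ring /\
  (forall (k : nat) (xs a : 'I_k -> A), partition_of_unity a ->
      exists x, convex_comb x xs a) /\
  (exists S : seq A, forall x : A,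
      exists (k : nat) (xs a : 'I_k -> A),
        (forall i, xs i \in S) /\ partition_of_unity a /\ convex_comb x xs a).

(* a polynomial in A[X_1..X_n], as a finite list of (coefficient, exponent
   vector) monomials, and its evaluation *)
Definition mpoly_eval (n : nat) (p : seq (A * {ffun 'I_n -> nat}))
  (x : 'I_n -> A) : A :=
  \sum_(t <- p) t.1 * \prod_(i < n) x i ^+ t.2 i.

Definition contractive (n m : nat) (f : ('I_n -> A) -> ('I_m -> A)) : Prop :=
  forall x y, ble (dist (f x) (f y)) (dist x y).

End Defs.

(* Main.v *)
Require Import Defs.
From HB Require Import structures.
From mathcomp Require Import all_boot all_order all_algebra.
From Stdlib Require Import ClassicalEpsilon.
Set Implicit Arguments. Unset Strict Implicit. Unset Printing Implicit Defensive.
Import GRing.Theory.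
Local Open Scope ring_scope.

Lemma gen_idem_eid (A : comPzRingType) (hr : regular_ring A) (a : A) :
  gen_idem a (eid a).
Proof.
rewrite /eid; apply: epsilon_spec.
have [b hb] := hr a; exists (a * b); split; first by rewrite /Defs.idempotent mulrA hb.
split; last by exists b.
by exists a; rewrite hb.
Qed.

Lemma gi_absorb (A : comPzRingType) (e a : A) : gen_idem a e -> e * a = a.
Proof. by case=> ide [[u ->] _]; rewrite mulrA ide. Qed.

Lemma eid_absorb (A : comPzRingType) (hr : regular_ring A) (a : A) :
  eid a * a = a.
Proof. exact: gi_absorb (gen_idem_eid hr a). Qed.

Lemma eid_idem (A : comPzRingType) (hr : regular_ring A) (a : A) :
  eid a * eid a = eid a.
Proof. by case: (gen_idem_eid hr a). Qed.

Lemma eid_of (A : comPzRingType) (hr : regular_ring A) (a : A) :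
  exists v, eid a = a * v.
Proof. by case: (gen_idem_eid hr a) => _ [_ h]. Qed.

Lemma eid_mulz (A : comPzRingType) (hr : regular_ring A) (a z u : A) :
  z = a * u -> eid a * z = z.
Proof. by move=> ->; rewrite mulrA eid_absorb. Qed.

Lemma eid_congr (A : comPzRingType) (hr : regular_ring A) (F a b : A) :
  F * a = F * b -> F * eid a = F * eid b.
Proof.
move=> h.
have key : forall a b : A, F * a = F * b -> F * eid a = F * eid a * eid b.
  move=> x y hxy; have [v hv] := eid_of hr x.
  rewrite hv mulrA hxy -[in LHS](eid_absorb hr y) [RHS]mulrC !mulrA.
  by rewrite [eid y * F]mulrC.
rewrite (key a b h) (key b a (esym h)).
by rewrite -!mulrA [eid a * _]mulrC.
Qed.

Lemma eid_diff (A : comPzRingType) (hr : regular_ring A) (a b : A) :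
  exists u, eid a - eid b = (a - b) * u.
Proof.
set E := eid (a - b).
have h1 : (1 - E) * a = (1 - E) * b.
  apply/eqP; rewrite -subr_eq0 -mulrBr mulrBl mul1r /E eid_absorb //.
  by rewrite subrr.
have h2 := eid_congr hr h1.
have [w hw] := eid_of hr (a - b).
exists (w * (eid a - eid b)).
rewrite mulrA -hw -/E.
apply/eqP; rewrite -subr_eq0 -[X in X - _]mul1r -mulrBl mulrBr h2 subrr //.
Qed.
Definition polyfun (A : comPzRingType) (n : nat) (g : ('I_n -> A) -> A) : Prop :=
  exists p, forall x, g x = mpoly_eval p x.

Lemma pf_ext (A : comPzRingType) n (g h : ('I_n -> A) -> A) :
  (forall x, g x = h x) -> polyfun g -> polyfun h.
Proof. by move=> e [p hp]; exists p => x; rewrite -e hp. Qed.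

Lemma pf_const (A : comPzRingType) n (c : A) : polyfun (fun _ : 'I_n -> A => c).
Proof.
exists [:: (c, [ffun=> 0%N])] => x; rewrite /mpoly_eval big_seq1 /=.
by rewrite big1 ?mulr1 // => i _; rewrite ffunE expr0.
Qed.

Lemma pf_var (A : comPzRingType) n (k : 'I_n) : polyfun (fun x : 'I_n -> A => x k).
Proof.
exists [:: (1, [ffun i => nat_of_bool (i == k)])] => x; rewrite /mpoly_eval big_seq1 /=.
rewrite mul1r (bigD1 k) //= ffunE eqxx expr1 big1 ?mulr1 // => i /negbTE hi.
by rewrite ffunE hi expr0.
Qed.

Lemma pf_add (A : comPzRingType) n (g h : ('I_n -> A) -> A) :
  polyfun g -> polyfun h -> polyfun (fun x => g x + h x).
Proof.
by move=> [p hp] [q hq]; exists (p ++ q) => x; rewrite /mpoly_eval big_cat /= hp hq.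
Qed.

Lemma pf_mul (A : comPzRingType) n (g h : ('I_n -> A) -> A) :
  polyfun g -> polyfun h -> polyfun (fun x => g x * h x).
Proof.
move=> [p hp] [q hq].
exists [seq (t.1 * u.1, [ffun i => (t.2 i + u.2 i)%N]) | t : A * {ffun 'I_n -> nat} <- p, u : A * {ffun 'I_n -> nat} <- q] => x.
rewrite /= hp hq /mpoly_eval big_allpairs_dep mulr_suml; apply: eq_bigr => t _.
rewrite mulr_sumr; apply: eq_bigr => u _ /=.
rewrite [in RHS](eq_bigr (fun i => x i ^+ t.2 i * x i ^+ u.2 i)); last first.
  by move=> i _; rewrite ffunE exprD.
by rewrite big_split /= mulrACA.
Qed.

Lemma pf_opp (A : comPzRingType) n (g : ('I_n -> A) -> A) :
  polyfun g -> polyfun (fun x => - g x).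
Proof.
move=> hg; apply: pf_ext (pf_mul (pf_const n (-1)) hg) => x.
by rewrite mulN1r.
Qed.

Lemma pf_sub (A : comPzRingType) n (g h : ('I_n -> A) -> A) :
  polyfun g -> polyfun h -> polyfun (fun x => g x - h x).
Proof. by move=> hg hh; apply: pf_add hg (pf_opp hh). Qed.

Lemma pf_sum (A : comPzRingType) n (I : Type) (r : seq I) (P : pred I)
  (F : I -> ('I_n -> A) -> A) :
  (forall i, polyfun (F i)) -> polyfun (fun x => \sum_(i <- r | P i) F i x).
Proof.
move=> hF; elim: r => [|i r IH].
  by apply: pf_ext (pf_const n 0) => x; rewrite big_nil.
case hP: (P i).
  by apply: pf_ext (pf_add (hF i) IH) => x; rewrite big_cons hP.
by apply: pf_ext IH => x; rewrite big_cons hP.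
Qed.

Lemma pf_prod (A : comPzRingType) n (I : Type) (r : seq I) (P : pred I)
  (F : I -> ('I_n -> A) -> A) :
  (forall i, polyfun (F i)) -> polyfun (fun x => \prod_(i <- r | P i) F i x).
Proof.
move=> hF; elim: r => [|i r IH].
  by apply: pf_ext (pf_const n 1) => x; rewrite big_nil.
case hP: (P i).
  by apply: pf_ext (pf_mul (hF i) IH) => x; rewrite big_cons hP.
by apply: pf_ext IH => x; rewrite big_cons hP.
Qed.

Lemma pf_expr (A : comPzRingType) n (g : ('I_n -> A) -> A) (e : nat) :
  polyfun g -> polyfun (fun x => g x ^+ e).
Proof.
move=> hg; elim: e => [|e IH].
  by apply: pf_ext (pf_const n 1) => x; rewrite expr0.
by apply: pf_ext (pf_mul hg IH) => x; rewrite exprS.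
Qed.

Lemma mpoly_ind (A : comPzRingType) n (Q : (('I_n -> A) -> A) -> Prop) :
  (forall g h, (forall x, g x = h x) -> Q g -> Q h) ->
  (forall c, Q (fun _ => c)) -> (forall k, Q (fun x => x k)) ->
  (forall g h, Q g -> Q h -> Q (fun x => g x + h x)) ->
  (forall g h, Q g -> Q h -> Q (fun x => g x * h x)) ->
  forall g, polyfun g -> Q g.
Proof.
move=> Qe Qc Qv Qa Qm g [p hp]; apply: (Qe _ _ (fun x => esym (hp x))).
rewrite /mpoly_eval.
have Qs : forall (I : Type) (r : seq I) (F : I -> ('I_n -> A) -> A),
    (forall i, Q (F i)) -> Q (fun x => \sum_(i <- r) F i x).
  move=> I r F hF; elim: r => [|i r IH]; first by apply: (Qe _ _ _ (Qc 0)) => x; rewrite big_nil.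
  by apply: (Qe _ _ _ (Qa _ _ (hF i) IH)) => x; rewrite big_cons.
have Qp : forall (I : Type) (r : seq I) (F : I -> ('I_n -> A) -> A),
    (forall i, Q (F i)) -> Q (fun x => \prod_(i <- r) F i x).
  move=> I r F hF; elim: r => [|i r IH]; first by apply: (Qe _ _ _ (Qc 1)) => x; rewrite big_nil.
  by apply: (Qe _ _ _ (Qm _ _ (hF i) IH)) => x; rewrite big_cons.
apply: (Qs) => t; apply: (Qm) => //; apply: (Qp) => i.
elim: (t.2 i) => [|e IH]; first by apply: (Qe _ _ _ (Qc 1)) => x; rewrite expr0.
by apply: (Qe _ _ _ (Qm _ _ (Qv i) IH)) => x; rewrite exprS.
Qed.
Lemma two_ideal (A : comPzRingType) (hr : regular_ring A) (p q z u w : A) :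
  z = p * u -> z = q * w -> exists r, z = p * q * r.
Proof.
move=> hp hq; have [p' hp'] := hr p; have [q' hq'] := hr q.
have ep : p * p' * z = z by rewrite hp mulrA hp'.
have eq : q * q' * z = z by rewrite hq mulrA hq'.
exists (p' * q' * z).
by rewrite -{1}ep -{1}eq !mulrA [p * p' * q]mulrAC.
Qed.

Lemma prod_ideal (A : comPzRingType) (hr : regular_ring A) (a z : A) (s : seq A) :
  (forall b, b \in s -> exists u, z = (a - b) * u) ->
  exists u, z = (\prod_(b <- s) (a - b)) * u.
Proof.
elim: s => [|b s IH] h; first by exists z; rewrite big_nil mul1r.
have [u hu] := h b (mem_head _ _).
have [w hw] : exists w, z = (\prod_(b <- s) (a - b)) * w.
  by apply: IH => c hc; apply: h; rewrite in_cons hc orbT.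
have [r hr'] := two_ideal hr hu hw.
by exists r; rewrite big_cons.
Qed.

Lemma part_zero (A : comPzRingType) (k : nat) (c : 'I_k -> A) (z : A) :
  partition_of_unity c -> (forall i, c i * z = 0) -> z = 0.
Proof.
case=> _ [_ hs] hz.
rewrite -[z]mul1r -hs.
apply: (big_ind (fun y => y * z = 0)) => //; first by rewrite mul0r.
move=> y1 y2 h1 h2; rewrite /bplus expr2 -mulrA [(y1 - y2) * z]mulrBl h1 h2 subrr mulr0 //.
Qed.

Lemma prod_in0 (A : comPzRingType) (s : seq A) (c : A) :
  c \in s -> \prod_(b <- s) (c - b) = 0.
Proof.
elim: s => [//|b s IH]; rewrite in_cons big_cons => /orP [/eqP <-|h].
  by rewrite subrr mul0r.
by rewrite IH // mulr0.
Qed.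
Definition upoly (A : comPzRingType) (g : A -> A) : Prop :=
  polyfun (fun y : 'I_1 -> A => g (y ord0)).

Lemma upoly_diff (A : comPzRingType) (g : A -> A) : upoly g ->
  forall a b, exists w, g a - g b = (a - b) * w.
Proof.
move=> hg a b.
pose Q := fun G : ('I_1 -> A) -> A =>
  forall y z : 'I_1 -> A, exists w, G y - G z = (y ord0 - z ord0) * w.
have : Q (fun y => g (y ord0)).
  apply: (mpoly_ind (Q := Q)) hg.
  - by move=> G H e hG y z; rewrite -!e; apply: hG.
  - by move=> c y z; exists 0; rewrite subrr mulr0.
  - by move=> k y z; exists 1; rewrite mulr1 (ord1 k).
  - move=> G H hG hH y z; have [w1 h1] := hG y z; have [w2 h2] := hH y z.
    by exists (w1 + w2); rewrite mulrDr -h1 -h2 addrACA opprD.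
  - move=> G H hG hH y z; have [w1 h1] := hG y z; have [w2 h2] := hH y z.
    exists (w1 * H y + G z * w2).
    have -> : G y * H y - G z * H z = (G y - G z) * H y + G z * (H y - H z).
      by rewrite mulrBl mulrBr addrA subrK.
    by rewrite h1 h2 mulrDr !mulrA [G z * _]mulrC.
by move=> /(_ (fun _ => a) (fun _ => b)).
Qed.

Lemma upoly_comp (A : comPzRingType) n (g : A -> A) (L : ('I_n -> A) -> A) :
  upoly g -> polyfun L -> polyfun (fun x => g (L x)).
Proof.
move=> hg hL.
pose Q := fun G : ('I_1 -> A) -> A => polyfun (fun x => G (fun _ => L x)).
have : Q (fun y => g (y ord0)).
  apply: (mpoly_ind (Q := Q)) hg.
  - by move=> G H e hG; apply: pf_ext hG => x; rewrite e.
  - by move=> c; apply: pf_const.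
  - by move=> k.
  - by move=> G H hG hH; apply: pf_add.
  - by move=> G H hG hH; apply: pf_mul.
by [].
Qed.

Lemma interp (A : comPzRingType) (hr : regular_ring A) (v : A -> A) (s : seq A) :
  (forall a b, exists u, v a - v b = (a - b) * u) ->
  exists P : A -> A, upoly P /\ forall a, a \in s -> P a = v a.
Proof.
move=> hv; elim: s => [|a s [P [uP hP]]].
  by exists (fun _ => 0); split => //; apply: pf_const.
have [R hR] : exists R, v a - P a = (\prod_(b <- s) (a - b)) * R.
  apply: prod_ideal => // b hb.
  have [u hu] := hv a b; have [w hw] := upoly_diff uP a b.
  exists (u - w); rewrite mulrBr -hu -hw (hP b hb).
  by rewrite opprB addrA subrK.
exists (fun c => P c + R * \prod_(b <- s) (c - b)); split.
  apply: pf_add uP _; apply: pf_mul; first exact: pf_const.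
  by apply: pf_prod => b; apply: pf_sub; [apply: pf_var | apply: pf_const].
move=> c; rewrite in_cons => /orP [/eqP ->|hc].
  by rewrite mulrC -hR addrC subrK.
by rewrite prod_in0 // mulr0 addr0 hP.
Qed.

Lemma eid_poly (A : comPzRingType) (hA : CFG_ring A) : upoly (@eid A).
Proof.
case: hA => hr [_ [S hS]].
have [P [uP hP]] := interp hr S (eid_diff hr).
have uP2 := uP; apply: pf_ext uP2 => y; set x := y ord0.
have [k [xs [c [hin [hc hcc]]]]] := hS x.
apply/eqP; rewrite -subr_eq0; apply/eqP; apply: (part_zero hc) => i.
have h0 : c i * (x - xs i) = 0.
  by rewrite -(eid_absorb hr (x - xs i)) mulrA hcc mul0r.
have [w hw] := upoly_diff uP x (xs i).
have [u hu] := eid_diff hr x (xs i).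
have -> : P x - eid x = (P x - P (xs i)) - (eid x - eid (xs i)).
  by rewrite (hP _ (hin i)) opprB addrA subrK.
by rewrite hw hu -mulrBr mulrA h0 mul0r.
Qed.
Lemma join_le (A : comPzRingType) (I : eqType) (r : seq I) (F : I -> A) (j : I) :
  j \in r -> F j * F j = F j -> F j * \big[@bjoin A/0]_(i <- r) F i = F j.
Proof.
move=> + idj; elim: r => [//|i r IH]; rewrite in_cons big_cons /bjoin.
case: (eqVneq j i) => [<- _|_ /= hj].
  by rewrite mulrBr mulrDr mulrA idj addrK.
rewrite mulrBr mulrDr IH // mulrCA IH // [F i * F j]mulrC.
by rewrite [F j * F i + _]addrC addrK.
Qed.

Lemma le_dist (A : comPzRingType) (hr : regular_ring A) k (x y : 'I_k -> A) i :
  eid (x i - y i) * dist x y = eid (x i - y i).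
Proof.
apply: (join_le (F := fun i => eid (x i - y i))); first exact: mem_index_enum.
exact: eid_idem.
Qed.

Lemma kill1 (A : comPzRingType) (hr : regular_ring A) k (x y : 'I_k -> A) (D : A) :
  (forall i, D * (x i - y i) = 0) -> D * dist x y = 0.
Proof.
move=> h; apply: (big_ind (fun z => D * z = 0)); first by rewrite mulr0.
  by move=> a b ha hb; rewrite /bjoin mulrBr mulrDr ha hb mulrA ha mul0r addr0 subr0.
move=> i _; have [v hv] := eid_of hr (x i - y i).
by rewrite hv mulrA h mul0r.
Qed.

Lemma kill2 (A : comPzRingType) (hr : regular_ring A) k (x y : 'I_k -> A) (D : A) i :
  D * dist x y = 0 -> D * (x i - y i) = 0.
Proof.
move=> h; rewrite -(eid_absorb hr (x i - y i)) -(le_dist hr x y i).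
by rewrite !mulrA [D * eid _ * _]mulrAC h !mul0r.
Qed.

Lemma pf_agree (A : comPzRingType) n (g : ('I_n -> A) -> A) (F : A) (x y : 'I_n -> A) :
  polyfun g -> (forall k, F * x k = F * y k) -> F * g x = F * g y.
Proof.
move=> hg hxy.
apply: (mpoly_ind (Q := fun G => F * G x = F * G y)) hg.
- by move=> G H e; rewrite !e.
- by [].
- by [].
- by move=> G H hG hH; rewrite !mulrDr hG hH.
- by move=> G H hG hH; rewrite !mulrA hG -!mulrA [LHS]mulrCA [RHS]mulrCA hH.
Qed.

Lemma telescope (A : comPzRingType) (F : nat -> A) (N : nat) :
  \sum_(0 <= i < N) F i * \prod_(0 <= j < i) (1 - F j) =
  1 - \prod_(0 <= j < N) (1 - F j).
Proof.
elim: N => [|N IH]; first by rewrite !big_geq // subrr.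
rewrite !big_nat_recr //= IH.
rewrite mulrBr mulr1 [F N * _]mulrC opprB addrA.
by rewrite addrAC.
Qed.
Lemma forward (A : comPzRingType) n m (hA : CFG_ring A)
  (f : ('I_n -> A) -> ('I_m -> A)) :
  contractive f -> forall j, polyfun (fun x => f x j).
Proof.
move=> hf j.
have hr : regular_ring A by case: hA.
have eP := eid_poly hA.
case: hA => _ [_ [S hS]].
pose N := size S.
pose s := fun i : nat => nth 0 S i.
pose g := fun (i : nat) (a : A) => 1 - eid (a - s i).
pose h := fun (i : nat) (a : A) => g i a * \prod_(0 <= jj < i) (1 - g jj a).
have H1 : forall a, \sum_(i < N) h i a = 1.
  move=> a; rewrite -(big_mkord xpredT (fun i => h i a)) /h telescope.
  suff -> : \prod_(0 <= jj < N) (1 - g jj a) = 0 by rewrite subr0.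
  have [k [xs [c [hin [hc hcc]]]]] := hS a.
  apply: (part_zero hc) => i.
  have hi : (index (xs i) S < N)%N by rewrite index_mem.
  rewrite big_mkord (bigD1 (Ordinal hi)) //= /g /s nth_index // subKr.
  by rewrite mulrA hcc mul0r.
have H2 : forall i a, h i a * (a - s i) = 0.
  move=> i a; rewrite /h mulrAC /g mulrBl mul1r eid_absorb // subrr mul0r //.
have H3 : forall i (k : 'I_n), polyfun (fun x => h i (x k)).
  move=> i k.
  have G : forall jj, polyfun (fun x : 'I_n -> A => g jj (x k)).
    move=> jj; apply: pf_sub; first exact: pf_const.
    apply: (upoly_comp (L := fun x => x k - s jj) eP).
    by apply: pf_sub; [exact: pf_var | exact: pf_const].
  apply: pf_mul; first exact: G.
  by apply: pf_prod => jj; apply: pf_sub; [exact: pf_const | exact: G].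
pose t := fun (tau : {ffun 'I_n -> 'I_N}) (k : 'I_n) => s (tau k).
have E : forall x, f x j =
    \sum_(tau : {ffun 'I_n -> 'I_N}) (\prod_(k < n) h (tau k) (x k)) * f (t tau) j.
  move=> x.
  have one : \prod_(k < n) \sum_(i < N) h i (x k) = 1.
    by rewrite big1 // => k _; apply: H1.
  transitivity ((\prod_(k < n) \sum_(i < N) h i (x k)) * f x j).
    by rewrite one mul1r.
  rewrite bigA_distr_bigA mulr_suml; apply: eq_bigr => tau _.
  set D := \prod_(k < n) h (tau k) (x k).
  have hD : forall k, D * (x k - t tau k) = 0.
    by move=> k; rewrite /D (bigD1 k) //= mulrAC H2 mul0r.
  have hD2 : D * dist x (t tau) = 0 by apply: kill1.
  have hD3 : D * dist (f x) (f (t tau)) = 0.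
    by rewrite -(hf x (t tau)) mulrCA hD2 mulr0.
  have := kill2 hr j hD3.
  by rewrite mulrBr => /eqP; rewrite subr_eq0 => /eqP.
apply: pf_ext (fun x => esym (E x)) _.
apply: pf_sum => tau; apply: pf_mul; last exact: pf_const.
by apply: pf_prod => k; apply: H3.
Qed.

Lemma backward (A : comPzRingType) n m (hA : CFG_ring A)
  (f : ('I_n -> A) -> ('I_m -> A)) :
  (forall j, polyfun (fun x => f x j)) -> contractive f.
Proof.
move=> hp x y.
have hr : regular_ring A by case: hA.
set D := dist x y.
have hF : forall k, (1 - D) * x k = (1 - D) * y k.
  move=> k; apply/eqP; rewrite -subr_eq0 -mulrBr.
  have le := le_dist hr x y k; rewrite -/D in le.
  rewrite -(eid_absorb hr (x k - y k)) mulrA mulrBl mul1r [D * _]mulrC le.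
  by rewrite subrr mul0r.
have hF2 : (1 - D) * dist (f x) (f y) = 0.
  apply: kill1 => // j; rewrite mulrBr; apply/eqP; rewrite subr_eq0; apply/eqP.
  exact: pf_agree (hp j) hF.
rewrite /ble; apply/eqP; rewrite -subr_eq0 -[X in _ - X]mulr1 -mulrBr mulrC.
by rewrite -opprB mulNr hF2 oppr0.
Qed.

Local Close Scope ring_scope.

Theorem mainTheorem2 (A : comPzRingType) (n m : nat)
  (hA : CFG_ring A) (hn : (1 <= n)%N) (hm : (1 <= m)%N)
  (f : ('I_n -> A) -> ('I_m -> A)) :
  contractive f <->
  exists p : 'I_m -> seq (A * {ffun 'I_n -> nat}),
    forall (x : 'I_n -> A) (j : 'I_m), f x j = mpoly_eval (p j) x.
Proof.
split.
  move=> hf; have hj := forward hA hf.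
  exists (fun j => epsilon (inhabits [::])
            (fun p => forall x, f x j = mpoly_eval p x)) => x j.
  by have := epsilon_spec (inhabits [::]) _ (hj j) => /(_ x).
move=> [p hp]; apply: (backward hA) => j; exists (p j) => x; exact: hp.
Qed.
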